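(* In the setting of the context, let $r\in\mathcal{R}$ with $U_{>r}\ne\emptyset$, and let $r'$ be the smallest integer bigger than $r$ such that $U_{r'}$ is nonempty. Then: (1) if $r=0$, then $\Delta^\omega_r=\Delta^\omega_{r'}$; (2) $\Delta^\omega_r\le\Delta^\omega_{r'}$; (3) $\Delta^\omega_r-r\ge\Delta^\omega_{r'}-r'$.
   Context: $k$ is a global field, all extensions lie in a separable closure. $p$ is a prime, $m\ge2$, $K_0,\dots,K_m$ are cyclic extensions of $k$ with $[K_i:k]=p^{\epsilon_i}$, $\epsilon_0\le\epsilon_i$ for all $i$, $\bigcap_{i=0}^mK_i=k$, and $K_j\not\subseteq K_i$ for $i\ne j$. $\mathcal{I}=\{1,\dots,m\}$. $K_i(d)$ ($0\le d\le\epsilon_i$) is the subfield of $K_i$ of degree $p^d$; $p^{e_{0,i}}=[K_0\cap K_i:k]$. $U_r=\{i\in\mathcal I:e_{0,i}=r\}$, $U_{>r}=\{i:e_{0,i}>r\}$, $U_{<r}=\{i:e_{0,i}<r\}$, $\mathcal R=\{r:U_r\ne\emptyset\}$. For nonempty $C\subseteq\mathcal I$, $M_C(d)$ is the compositum of the $K_i(d)$, $i\in C$. The algebraic patching degree $\Delta^\omega_r$ of $U_r$ is $\epsilon_0$ if $U_r=\mathcal I$, and otherwise the largest integer $0\le d\le\epsilon_0$ such that (1) if $U_{>r}\ne\emptyset$ then $M_{U_{>r}}(d)\subseteq\bigcap_{i\in U_r}K_0(d)K_i(d)$, and (2) if $U_{<r}\ne\emptyset$ then $M_{U_r}(d)\subseteq\bigcap_{i\in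 U_{<r}}K_0(d)K_i(d)$. *)

(* Defs.v *)
From HB Require Import structures.
From mathcomp Require Import all_boot all_order all_algebra all_fingroup all_solvable all_field.
Set Implicit Arguments. Unset Strict Implicit. Unset Printing Implicit Defensive.
Import GRing.Theory.

(* Setting: k = the base field F; everything lives in a finite normal extension
   L of F (any finite Galois extension of k containing all the K_i, e.g. their
   compositum inside the separable closure).  Indices 0..m are natural numbers;
   K i = K_i, Kd i d = K_i(d) (the subfield of K_i of degree p^d).
   Composita of subfields are products of subspaces (prodv), which for subfields
   of a field is exactly the compositum. *)
Section Patching.
Variables (F : fieldType) (L : fieldExtType F).
Variables (p m : nat) (K : nat -> {subfield L}) (Kd : nat -> nat -> {subfield L}).
Variable eps0 : nat.

Local Open Scope vspace_scope.

Definition e0 (i : nat) : nat := logn p (\dim (K 0 :&: K i)).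

Definition Iset : seq nat := iota 1 m.
Definition Ueq (r : nat) : seq nat := [seq i <- Iset | e0 i == r].
Definition Ugt (r : nat) : seq nat := [seq i <- Iset | r < e0 i].
Definition Ult (r : nat) : seq nat := [seq i <- Iset | e0 i < r].

Definition MC (C : seq nat) (d : nat) : {vspace L} :=
  \big[@prodv F L/1%VS]_(i <- C) (Kd i d : {vspace L}).

Definition capK0 (C : seq nat) (d : nat) : {vspace L} :=
  \bigcap_(i <- C) (Kd 0 d * Kd i d).

Definition patch_cond (r d : nat) : bool :=
  ((Ugt r != [::]) ==> (MC (Ugt r) d <= capK0 (Ueq r) d)) &&
  ((Ult r != [::]) ==> (MC (Ueq r) d <= capK0 (Ult r) d)).

Definition Delta (r : nat) : nat :=
  if all (fun i => e0 i == r) Iset then eps0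
  else (\max_(d < eps0.+1 | patch_cond r d) (d : nat))%N.

End Patching.

(* Main.v *)
Require Import Defs.
From HB Require Import structures.
From mathcomp Require Import all_boot all_order all_algebra all_fingroup all_solvable all_field.
From mathcomp Require Import zify.
Import GRing.Theory Num.Theory.

Set Implicit Arguments. Unset Strict Implicit. Unset Printing Implicit Defensive.

Section Sep.
Local Open Scope ring_scope.
Variables (F : fieldType) (L : splittingFieldType F).
Local Open Scope vspace_scope.

Definition Ssep : {subfield L} := <<1; separable_generator 1 fullv>>%AS.

Lemma sep_in_S x : separable_element 1 x -> x \in Ssep.
Proof.
move=> sx; rewrite -separable_inseparable_element.
rewrite (separable_elementS (sub1v _) sx) /=.
exact: (purely_inseparableP (separable_generator_maximal fullv 1%AS)) x (memvf x).
Qed.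

Lemma galSsep : galois 1 Ssep.
Proof.
have sepS : separable 1 Ssep by rewrite -adjoin_separable_eq separable_generatorP.
rewrite /galois sub1v sepS /=.
apply/normalFieldP => a Sa.
have [r /eqP Dr] := splitting_field_normal 1 a.
exists r => //; apply/allP => b rb; apply: sep_in_S.
apply/separable_elementP; exists (minPoly 1 a); split.
- exact: minPolyOver.
- by rewrite Dr root_prod_XsubC.
- exact: (separableP sepS) a Sa.
Qed.
End Sep.

Section CycChain.
Local Open Scope group_scope.

Lemma cyc_chain (gT : finGroupType) (M N A B : {group gT}) :
  M \subset 'N(N) -> N \subset A -> N \subset B -> A \subset M -> B \subset M ->
  cyclic (M / N) -> #|B| %| #|A| -> B \subset A.
Proof.
move=> nNM sNA sNB sAM sBM cyc dBA.
have nNA := subset_trans sAM nNM; have nNB := subset_trans sBM nNM.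
rewrite -(quotientSGK nNB sNA) -(cardSg_cyclic cyc) ?quotientS //.
rewrite !card_quotient //.
rewrite -(dvdn_pmul2l (cardG_gt0 N)) !Lagrange //.
Qed.

End CycChain.


Section Frame.
Local Open Scope group_scope.
Variables (F : fieldType) (L : splittingFieldType F).
Local Notation S := (Ssep L).

Lemma galXS (X : {subfield L}) : (X <= S)%VS -> galois X S.
Proof. by move=> XS; apply: (galoisS _ (galSsep L)); rewrite sub1v XS. Qed.

Lemma fixX (X : {subfield L}) : (X <= S)%VS -> fixedField 'Gal(S / X) = X.
Proof. by move=> XS; apply/galois_fixedField/galXS. Qed.

Lemma gal_sub (X Y : {subfield L}) : (X <= S)%VS -> (Y <= S)%VS ->
  (X <= Y)%VS = ('Gal(S / Y) \subset 'Gal(S / X))%g.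
Proof.
move=> XS YS; apply/idP/idP => [|h]; first exact: galS.
by rewrite -(fixX YS) -galois_connection.
Qed.

Lemma gal_prod (X Y : {subfield L}) : (X <= S)%VS -> (Y <= S)%VS ->
  'Gal(S / (X * Y)%VS) = ('Gal(S / X) :&: 'Gal(S / Y))%g.
Proof.
move=> XS YS; apply/eqP; rewrite eqEsubset; apply/andP; split.
  by rewrite subsetI !galS ?field_subvMr ?field_subvMl.
rewrite galois_connection; last by rewrite prodv_sub.
apply: (@prodv_sub _ _ _ _ (fixedField_aspace _)).
  by rewrite -galois_connection // subsetIl.
by rewrite -galois_connection // subsetIr.
Qed.

Lemma card_gal (X : {subfield L}) : (X <= S)%VS ->
  (#|'Gal(S / X)| * \dim X)%N = \dim S.
Proof. by move=> XS; rewrite -galois_dim ?galXS // -dim_sup_field. Qed.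

Lemma gal_capv (X Y : {subfield L}) : (X <= S)%VS -> (Y <= S)%VS ->
  'Gal(S / (X :&: Y)%VS) = ('Gal(S / X) <*> 'Gal(S / Y))%g.
Proof.
move=> XS YS; set J := ('Gal(S / X) <*> 'Gal(S / Y))%G.
have XYS : (X :&: Y <= S)%VS by rewrite (subv_trans (capvSl _ _)).
have -> : (X :&: Y)%VS = fixedField J.
  apply/eqP; rewrite eqEsubv; apply/andP; split.
    rewrite -galois_connection //= join_subG !galS ?capvSl ?capvSr //.
  rewrite subv_cap; apply/andP; split.
    by apply: (subv_trans (fixedFieldS (joing_subl _ _))); rewrite fixX.
  by apply: (subv_trans (fixedFieldS (joing_subr _ _))); rewrite fixX.
by rewrite gal_fixedField.
Qed.

Definition cycF (Y : {subfield L}) :=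
  [&& (Y <= S)%VS, 'Gal(S / Y) <| 'Gal(S / 1%VS) & cyclic ('Gal(S / 1%VS) / 'Gal(S / Y))].

Lemma dimF (X Y : {subfield L}) : (X <= S)%VS -> cycF Y ->
  (\dim (X * Y) * \dim (X :&: Y) = \dim X * \dim Y)%N.
Proof.
move=> XS /and3P[YS nY _].
have XYS : (X * Y <= S)%VS by rewrite prodv_sub.
have XcYS : (X :&: Y <= S)%VS by rewrite (subv_trans (capvSl _ _)).
have hX := card_gal XS; have hY := card_gal YS.
have hM := @card_gal (X * Y)%AS XYS; have hC := @card_gal (X :&: Y)%AS XcYS.
rewrite /= gal_prod // in hM; rewrite /= gal_capv // in hC.
rewrite norm_joinEl in hC; last first.
  by apply: subset_trans (normal_norm nY); apply: galS; apply: sub1v.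
have mc := mul_cardG 'Gal(S / X) 'Gal(S / Y).
move: hX hY hM hC mc; rewrite -/S.
move: (\dim S) (\dim X) (\dim Y) (\dim (X * Y)) (\dim (X :&: Y)) => s x y u v.
have : (0 < #|'Gal(S / X)| * #|'Gal(S / Y)|)%N by rewrite muln_gt0 !cardG_gt0.
move: #|'Gal(S / X)| #|'Gal(S / Y)| #|('Gal(S / X) :&: 'Gal(S / Y))%g| => a b d.
move: #|('Gal(S / X) * 'Gal(S / Y))%g| => c.
move=> ab0 hx hy hu hv hab; apply/eqP; rewrite -(eqn_pmul2l ab0).
by rewrite [X in _ == X]mulnACA hx hy hab [(c * d)%N]mulnC mulnACA hu hv.
Qed.

Lemma chainF (X Y A B : {subfield L}) : (X <= S)%VS -> cycF Y ->
  (X <= A)%VS -> (A <= X * Y)%VS -> (X <= B)%VS -> (B <= X * Y)%VS ->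
  (\dim A %| \dim B)%N -> (A <= B)%VS.
Proof.
move=> XS /and3P[YS nY cY] XA AXY XB BXY dAB.
have XYS : (X * Y <= S)%VS by rewrite prodv_sub.
have AS := subv_trans AXY XYS; have BS := subv_trans BXY XYS.
have GX : 'Gal(S / X) \subset 'Gal(S / 1%VS) by apply: galS; apply: sub1v.
rewrite gal_sub //.
apply: (@cyc_chain _ 'Gal(S / X) 'Gal(S / (X * Y)%VS)).
- by rewrite /= gal_prod // normsI ?normG // (subset_trans GX (normal_norm nY)).
- exact: galS.
- exact: galS.
- exact: galS.
- exact: galS.
- rewrite /= gal_prod // setIC (isog_cyclic (second_isog _)); last first.
    exact: (subset_trans GX (normal_norm nY)).
  exact: (cyclicS (quotientS _ GX) cY).
- have hA := card_gal AS; have hB := card_gal BS.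
  move: dAB => /dvdnP[k Dk].
  apply/dvdnP; exists k; apply/eqP.
  rewrite -(@eqn_pmul2r (\dim A)) ?adim_gt0 // hA -hB Dk.
  by rewrite mulnA [(#|_| * k)%N]mulnC.
Qed.

Lemma cycK (K : {subfield L}) : (K <= S)%VS -> galois 1 K -> cyclic 'Gal(K / 1%VS) ->
  cycF K.
Proof.
move=> KS gK cK; have nK : normalField 1 K by case/and3P: gK.
have s1KS : (1 <= K <= S)%VS by rewrite sub1v KS.
rewrite /cycF KS (normalField_normal s1KS nK) /=.
by rewrite (isog_cyclic (normalField_isog (galSsep L) s1KS nK)).
Qed.

Lemma cycSub (K M : {subfield L}) : cycF K -> (M <= K)%VS -> cycF M.
Proof.
case/and3P=> KS nK cK MK; have MS := subv_trans MK KS.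
have sKM : 'Gal(S / K) \subset 'Gal(S / M) by apply: galS.
have sMG : 'Gal(S / M) \subset 'Gal(S / 1%VS) by apply: galS; apply: sub1v.
have nM : 'Gal(S / M) <| 'Gal(S / 1%VS).
  apply: sub_der1_normal => //; apply: subset_trans sKM.
  exact: der1_min (normal_norm nK) (cyclic_abelian cK).
rewrite /cycF MS nM /= -(isog_cyclic (third_isog sKM nK nM)).
exact: quotient_cyclic.
Qed.
End Frame.


Lemma pdimE p d x n : 1 < p -> 0 < d -> d * p ^ x = p ^ n -> x <= n /\ d = p ^ (n - x).
Proof.
move=> p1 d0 h.
have xn : x <= n by rewrite -(dvdn_Pexp2l _ _ p1) -h dvdn_mull.
split=> //; apply/eqP; rewrite -(@eqn_pmul2r (p ^ x)) ?expn_gt0 ?(ltnW p1) //.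
by rewrite h -expnD subnK.
Qed.

Section Main.
Variables (F : fieldType) (L : splittingFieldType F).
Variables (p m : nat) (K : nat -> {subfield L}) (eps : nat -> nat).
Variable (Kd : nat -> nat -> {subfield L}).
Hypothesis hp : prime p.
Hypothesis hK : forall i, (i <= m)%N -> galois 1 (K i) && cyclic ('Gal(K i / 1%VS))%g.
Hypothesis hdim : forall i, (i <= m)%N -> \dim (K i) = (p ^ eps i)%N.
Hypothesis heps : forall i, (i <= m)%N -> (eps 0 <= eps i)%N.
Hypothesis hKd : forall i d, (i <= m)%N -> (d <= eps i)%N ->
     (Kd i d <= K i)%VS /\ \dim (Kd i d) = (p ^ d)%N.
Local Notation S := (Ssep L).
Local Notation e := (e0 p K).

Let p1 : 1 < p := prime_gt1 hp.
Let p0 : 0 < p := prime_gt0 hp.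

Lemma KS i : i <= m -> (K i <= S)%VS.
Proof.
move=> im; have /andP[/and3P[_ sep _] _] := hK im.
by apply/subvP => x Kx; apply: sep_in_S; exact: (separableP sep) x Kx.
Qed.

Lemma cK i : i <= m -> cycF (K i).
Proof. by move=> im; have /andP[g c] := hK im; apply: cycK => //; apply: KS. Qed.

Lemma Kd_sub i d : i <= m -> d <= eps i -> (Kd i d <= K i)%VS.
Proof. by move=> im de; case: (hKd im de). Qed.

Lemma Kd_dim i d : i <= m -> d <= eps i -> \dim (Kd i d) = p ^ d.
Proof. by move=> im de; case: (hKd im de). Qed.

Lemma cKd i d : i <= m -> d <= eps i -> cycF (Kd i d).
Proof. by move=> im de; apply: cycSub (cK im) (Kd_sub im de). Qed.

Lemma KdS i d : i <= m -> d <= eps i -> (Kd i d <= S)%VS.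
Proof. by move=> im de; apply: subv_trans (Kd_sub im de) (KS im). Qed.

Lemma chainK i (A B : {subfield L}) : i <= m -> (A <= K i)%VS -> (B <= K i)%VS ->
  \dim A %| \dim B -> (A <= B)%VS.
Proof.
move=> im AK BK dAB; apply: (@chainF _ _ 1%AS (K i)) => //.
- exact: sub1v.
- exact: cK.
- exact: sub1v.
- by rewrite prod1v.
- exact: sub1v.
- by rewrite prod1v.
Qed.

Lemma pow_of i (A : {subfield L}) : i <= m -> (A <= K i)%VS ->
  exists2 a, a <= eps i & \dim A = p ^ a.
Proof.
move=> im AK; apply/dvdn_pfactor => //.
by rewrite -hdim // field_dimS.
Qed.

Lemma pow_le (A B : {subfield L}) a b : (A <= B)%VS -> \dim A = p ^ a -> \dim B = p ^ b -> a <= b.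
Proof. by move=> AB hA hB; rewrite -(dvdn_Pexp2l _ _ p1) -hA -hB field_dimS. Qed.

Lemma e_dim i : i <= m -> \dim (K 0 :&: K i) = p ^ e i /\ e i <= eps 0.
Proof.
move=> im; have [a ae ha] := @pow_of 0 (K 0 :&: K i)%AS (leq0n _) (capvSl _ _).
by rewrite /e0 /= ha pfactorK.
Qed.

Lemma Kd_mono i a b : i <= m -> a <= b -> b <= eps i -> (Kd i a <= Kd i b)%VS.
Proof.
move=> im ab be; have ae := leq_trans ab be.
by apply: (chainK im); rewrite ?Kd_sub ?Kd_dim ?dvdn_exp2l.
Qed.

Lemma Kd_eq i t : i <= m -> t <= e i -> (Kd 0 t = Kd i t :> {vspace L}).
Proof.
move=> im te; have [de ee] := e_dim im.
have t0 : t <= eps 0 by apply: leq_trans ee.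
have ti : t <= eps i by apply: leq_trans (heps im).
have s1 : (Kd 0 t <= K i)%VS.
  apply: (subv_trans _ (capvSr (K 0) (K i))).
  apply: (@chainK 0 _ (K 0 :&: K i)%AS) => //; first exact: Kd_sub.
    exact: capvSl.
  by rewrite /= de Kd_dim // dvdn_exp2l.
apply/eqP; rewrite eqEsubv; apply/andP; split; apply: (chainK im) => //;
  rewrite ?Kd_sub ?Kd_dim //.
Qed.

Lemma capdim0 i a b : i <= m -> a <= eps 0 -> b <= eps i ->
  \dim (Kd 0 a :&: Kd i b) = p ^ (minn a (minn b (e i))).
Proof.
move=> im a0 bi; set t := minn a (minn b (e i)).
have [de ee] := e_dim im.
have JK0 : (Kd 0 a :&: Kd i b <= K 0)%VS.
  by apply: subv_trans (capvSl _ _) (Kd_sub _ a0).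
have [s _ hs] := @pow_of 0 (Kd 0 a :&: Kd i b)%AS (leq0n _) JK0.
have ta : t <= a by rewrite /t; lia.
have tb : t <= b by rewrite /t; lia.
have tei : t <= e i by rewrite /t; lia.
have ts : t <= s.
  apply: (@pow_le (Kd 0 t) (Kd 0 a :&: Kd i b)%AS) => //=; last first.
    by rewrite Kd_dim //; apply: leq_trans a0.
  rewrite subv_cap Kd_mono //= (Kd_eq im tei) Kd_mono //.
have sa : s <= a by apply: (@pow_le (Kd 0 a :&: Kd i b)%AS (Kd 0 a)); rewrite /= ?capvSl ?Kd_dim.
have sb : s <= b by apply: (@pow_le (Kd 0 a :&: Kd i b)%AS (Kd i b)); rewrite /= ?capvSr ?Kd_dim.
have se : s <= e i.
  apply: (@pow_le (Kd 0 a :&: Kd i b)%AS (K 0 :&: K i)%AS) => //=.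
  by apply: capvS; apply: Kd_sub.
by rewrite /= hs; congr (p ^ _); rewrite /t; lia.
Qed.

Lemma dimM0 i a b : i <= m -> a <= eps 0 -> b <= eps i ->
  \dim (Kd 0 a * Kd i b) = p ^ (a + b - minn a (minn b (e i))).
Proof.
move=> im a0 bi.
have := @dimF _ L (Kd 0 a) (Kd i b) (KdS (leq0n _) a0) (cKd im bi).
rewrite capdim0 // !Kd_dim // -expnD => h.
by case: (pdimE p1 (adim_gt0 _) h).
Qed.

Lemma dimM0' i a b : i <= m -> a <= eps 0 -> b <= eps i ->
  \dim (Kd i b * Kd 0 a) = p ^ (a + b - minn a (minn b (e i))).
Proof. by move=> *; rewrite prodvC dimM0. Qed.

Lemma dimM_lb k (X Y Z : {subfield L}) x y c : k <= m -> (X <= S)%VS -> cycF Y ->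
  \dim X = p ^ x -> \dim Y = p ^ y -> (X :&: Y <= K k)%VS ->
  (Z <= X)%VS -> (Z <= Y)%VS -> \dim Z = p ^ c ->
  \dim (X * Y) %| p ^ (x + y - c).
Proof.
move=> km XS cY hX hY JK ZX ZY hZ.
have [s _ hs] := @pow_of k (X :&: Y)%AS km JK.
have cs : c <= s by apply: (@pow_le Z (X :&: Y)%AS) => //=; rewrite subv_cap ZX.
have := dimF XS cY; rewrite /= hs hX hY -expnD => h.
have [sxy ->] := pdimE p1 (adim_gt0 _) h.
by rewrite dvdn_exp2l //; lia.
Qed.

Lemma one_MC C d : (1 <= MC Kd C d)%VS.
Proof.
elim: C => [|j C IH]; rewrite /MC ?big_nil ?big_cons ?subvv //.
apply: subv_trans (prodvS (sub1v (Kd j d)) IH); by rewrite prodv1 subvv.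
Qed.

Lemma MC_subP C d (V : {subfield L}) :
  (MC Kd C d <= V)%VS = all (fun j => Kd j d <= V)%VS C.
Proof.
elim: C => [|j C IH]; first by rewrite /MC big_nil sub1v.
rewrite /= -IH /MC big_cons -/(MC Kd C d).
apply/idP/andP => [h | [h1 h2]]; last exact: prodv_sub.
split; apply: subv_trans h.
  by apply: subv_trans (prodvSr _ (one_MC C d)); rewrite prodv1 subvv.
by apply: subv_trans (prodvSl _ (sub1v (Kd j d))); rewrite prod1v subvv.
Qed.

Lemma sub_capK0P (X : {vspace L}) C d :
  (X <= capK0 Kd C d)%VS = all (fun i => X <= Kd 0 d * Kd i d)%VS C.
Proof.
elim: C => [|i C IH]; first by rewrite /capK0 big_nil subvf.
by rewrite /capK0 big_cons subv_cap -/(capK0 Kd C d) IH.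
Qed.

Lemma MC_capP C C' d : (MC Kd C d <= capK0 Kd C' d)%VS <->
  (forall j i, j \in C -> i \in C' -> (Kd j d <= Kd 0 d * Kd i d)%VS).
Proof.
rewrite sub_capK0P; split.
  move=> /allP h j i jC iC; have := h i iC.
  by rewrite (@MC_subP C d (Kd 0 d * Kd i d)%AS) => /allP; apply.
move=> h; apply/allP => i iC.
by rewrite (@MC_subP C d (Kd 0 d * Kd i d)%AS); apply/allP => j jC; apply: h.
Qed.

Definition P1 r d := forall j i, j \in Ugt p m K r -> i \in Ueq p m K r ->
  (Kd j d <= Kd 0 d * Kd i d)%VS.
Definition P2 r d := forall i l, i \in Ueq p m K r -> l \in Ult p m K r ->
  (Kd i d <= Kd 0 d * Kd l d)%VS.

Lemma patchP r d : patch_cond p m K Kd r d <-> P1 r d /\ P2 r d.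
Proof.
rewrite /patch_cond; split.
  case/andP => g1 g2; split.
    move=> j i hj hi; have ne : Ugt p m K r != [::] by apply/eqP => E; rewrite E in hj.
    by have /MC_capP := implyP g1 ne; apply.
  move=> j i hj hi; have ne : Ult p m K r != [::] by apply/eqP => E; rewrite E in hi.
  by have /MC_capP := implyP g2 ne; apply.
case=> h1 h2; apply/andP; split; apply/implyP => _; apply/MC_capP.
  exact: h1.
exact: h2.
Qed.

Lemma Delta_ge r d : ~~ all (fun i => e i == r) (Iset m) -> d <= eps 0 ->
  patch_cond p m K Kd r d -> d <= Delta p m K Kd (eps 0) r.
Proof.
move=> na de pc; rewrite /Delta (negPf na).
have dlt : d < (eps 0).+1 by [].
exact: (@leq_bigmax_cond _ (fun x : 'I_(eps 0).+1 => patch_cond p m K Kd r x)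
   (fun x => nat_of_ord x) (Ordinal dlt)).
Qed.

Lemma Delta_att r d : ~~ all (fun i => e i == r) (Iset m) -> d <= eps 0 ->
  patch_cond p m K Kd r d ->
  patch_cond p m K Kd r (Delta p m K Kd (eps 0) r) /\ Delta p m K Kd (eps 0) r <= eps 0.
Proof.
move=> na de pc; rewrite /Delta (negPf na).
have dlt : d < (eps 0).+1 by [].
pose A := [pred x : 'I_(eps 0).+1 | patch_cond p m K Kd r x].
have A0 : 0 < #|A| by apply/card_gt0P; exists (Ordinal dlt).
have [i0 Ai0 E] := eq_bigmax_cond (fun x : 'I_(eps 0).+1 => nat_of_ord x) A0.
rewrite E; split; first exact: Ai0.
by rewrite -ltnS ltn_ord.
Qed.

Lemma inUeq i r : (i \in Ueq p m K r) = [&& 0 < i, i <= m & e i == r].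
Proof. by rewrite /Ueq mem_filter mem_iota; apply/idP/idP => /and3P[a b c]; apply/and3P; split. Qed.
Lemma inUgt i r : (i \in Ugt p m K r) = [&& 0 < i, i <= m & r < e i].
Proof. by rewrite /Ugt mem_filter mem_iota; apply/idP/idP => /and3P[a b c]; apply/and3P; split. Qed.
Lemma inUlt i r : (i \in Ult p m K r) = [&& 0 < i, i <= m & e i < r].
Proof. by rewrite /Ult mem_filter mem_iota; apply/idP/idP => /and3P[a b c]; apply/and3P; split. Qed.

Lemma TR (A : {vspace L}) (X Y Z : {subfield L}) :
  (A <= X * Y)%VS -> (Y <= X * Z)%VS -> (A <= X * Z)%VS.
Proof.
move=> h1 h2; apply: subv_trans h1 _.
by apply: (@prodv_sub _ _ _ _ (X * Z)%AS) => //; apply: field_subvMr.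
Qed.

Lemma e_le i : i <= m -> e i <= eps 0.
Proof. by case/e_dim. Qed.

Lemma patch_small r0 d : d <= r0 -> d <= eps 0 -> patch_cond p m K Kd r0 d.
Proof.
move=> dr de; apply/patchP; split.
  move=> j i; rewrite inUgt inUeq => /and3P[_ jm rj] /and3P[_ im _].
  rewrite -(Kd_eq jm) ?field_subvMr //; lia.
move=> i l; rewrite inUeq inUlt => /and3P[_ im /eqP ri] /and3P[_ lm _].
rewrite -(Kd_eq im) ?field_subvMr //; lia.
Qed.

Lemma not_all r j : j \in Ueq p m K r -> forall r2, r2 != r ->
  ~~ all (fun i => e i == r2) (Iset m).
Proof.
rewrite inUeq => /and3P[j0 jm /eqP ej] r2 ne; apply/allPn; exists j.
  by rewrite /Iset mem_iota add1n ltnS j0 jm.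
by rewrite ej eq_sym.
Qed.

Section Claims.
Variables r r' : nat.
Hypothesis hr : Ueq p m K r != [::].
Hypothesis hgt : Ugt p m K r != [::].
Hypothesis hrr : r < r'.
Hypothesis hr' : Ueq p m K r' != [::].
Hypothesis hgap : forall s, r < s < r' -> Ueq p m K s = [::].

Lemma gap_ge j : 0 < j -> j <= m -> r < e j -> r' <= e j.
Proof.
move=> j0 jm rj; rewrite leqNgt; apply/negP => ltj.
have := hgap (s := e j); rewrite rj ltj => /(_ isT) E.
have : j \in Ueq p m K (e j) by rewrite inUeq j0 jm eqxx.
by rewrite E.
Qed.

Lemma lt_le l : 0 < l -> l <= m -> e l < r' -> e l <= r.
Proof.
move=> l0 lm lr; rewrite leqNgt; apply/negP => rl.
by have := gap_ge l0 lm rl; rewrite leqNgt lr.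
Qed.

Let ex_r : exists i0, i0 \in Ueq p m K r.
Proof. by case: (Ueq p m K r) hr => [|a s] //= _; exists a; rewrite inE eqxx. Qed.
Let ex_r' : exists i0, i0 \in Ueq p m K r'.
Proof. by case: (Ueq p m K r') hr' => [|a s] //= _; exists a; rewrite inE eqxx. Qed.

Let na_r : ~~ all (fun i => e i == r) (Iset m).
Proof. have [i0 hi0] := ex_r'; apply: (not_all hi0); rewrite neq_ltn hrr. by []. Qed.
Let na_r' : ~~ all (fun i => e i == r') (Iset m).
Proof. have [i0 hi0] := ex_r; apply: (not_all hi0); rewrite neq_ltn hrr orbT. by []. Qed.

Let r_eps : r <= eps 0.
Proof. by have [i0] := ex_r; rewrite inUeq => /and3P[_ im /eqP <-]; apply: e_le. Qed.
Let r'_eps : r' <= eps 0.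
Proof. by have [i0] := ex_r'; rewrite inUeq => /and3P[_ im /eqP <-]; apply: e_le. Qed.

Local Notation D := (Delta p m K Kd (eps 0) r).
Local Notation D' := (Delta p m K Kd (eps 0) r').

Lemma D_facts : [/\ patch_cond p m K Kd r D, D <= eps 0 & r <= D].
Proof.
have pc := patch_small (leqnn r) r_eps.
have [h1 h2] := Delta_att na_r r_eps pc.
by split => //; apply: Delta_ge.
Qed.

Lemma D'_facts : [/\ patch_cond p m K Kd r' D', D' <= eps 0 & r' <= D'].
Proof.
have pc := patch_small (leqnn r') r'_eps.
have [h1 h2] := Delta_att na_r' r'_eps pc.
by split => //; apply: Delta_ge.
Qed.


Lemma claim2 : D <= D'.
Proof.
have [pc De rD] := D_facts; set d := D in pc De rD *.
have [P1r P2r] := (proj1 (patchP r d)) pc.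
have [l0 hl0] := ex_r.
have [l00 l0m /eqP el0] : [/\ 0 < l0, l0 <= m & e l0 == r] by apply/and3P; rewrite -inUeq.
apply: Delta_ge => //; apply/patchP; split.
  move=> j i; rewrite inUgt inUeq => /and3P[j0 jm rj] /and3P[i0 im /eqP ei].
  have dj : d <= eps j by apply: leq_trans (heps jm).
  have di : d <= eps i by apply: leq_trans (heps im).
  have jgt : j \in Ugt p m K r by rewrite inUgt j0 jm; lia.
  have igt : i \in Ugt p m K r by rewrite inUgt i0 im; lia.
  case: (leqP d r') => dr'.
    by rewrite -(Kd_eq jm) ?field_subvMr //; lia.
  have dl0 : d <= eps l0 by apply: leq_trans (heps l0m).
  apply: (subv_trans (field_subvMl (Kd 0 d) _)).
  apply: (@chainF _ L (Kd 0 d) (Kd l0 d) (Kd 0 d * Kd j d)%AS (Kd 0 d * Kd i d)%AS).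
  - exact: KdS.
  - exact: cKd.
  - exact: field_subvMr.
  - apply: (@prodv_sub _ _ _ _ (Kd 0 d * Kd l0 d)%AS); first exact: field_subvMr.
    exact: P1r.
  - exact: field_subvMr.
  - apply: (@prodv_sub _ _ _ _ (Kd 0 d * Kd l0 d)%AS); first exact: field_subvMr.
    exact: P1r.
  - rewrite /= !dimM0 // dvdn_exp2l //; lia.
move=> i l; rewrite inUeq inUlt => /and3P[i0 im /eqP ei] /and3P[l0' lm el].
have := lt_le l0' lm el; rewrite leq_eqVlt => /orP[/eqP elr | elr].
  apply: P1r; first by rewrite inUgt i0 im; lia.
  by rewrite inUeq l0' lm elr eqxx.
apply: (@TR _ _ (Kd l0 d)).
  apply: P1r; first by rewrite inUgt i0 im; lia.
  exact: hl0.
by apply: P2r => //; rewrite inUlt l0' lm elr.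
Qed.


Lemma claim1 : r = 0 -> D = D'.
Proof.
move=> r0; apply/eqP; rewrite eqn_leq claim2 /=.
have [pc De rD] := D'_facts; set d := D' in pc De rD *.
have [P1r P2r] := (proj1 (patchP r' d)) pc.
have [i1 hi1] := ex_r'.
apply: Delta_ge => //; apply/patchP; split.
  move=> j i; rewrite inUgt inUeq => /and3P[j0 jm rj] /and3P[i0 im /eqP ei].
  have := gap_ge j0 jm rj; rewrite leq_eqVlt => /orP[/eqP ej | ej].
    apply: P2r; first by rewrite inUeq j0 jm ej eqxx.
    by rewrite inUlt i0 im ei.
  apply: (@TR _ _ (Kd i1 d)).
    by apply: P1r => //; rewrite inUgt j0 jm.
  by apply: P2r => //; rewrite inUlt i0 im ei.
by move=> i l _; rewrite inUlt r0 ltn0 !andbF.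
Qed.

Lemma claim3 : D' + r <= D + r'.
Proof.
have [pc De rD] := D'_facts; set Dp := D' in pc De rD *.
have [P1r P2r] := (proj1 (patchP r' Dp)) pc.
have [_ _ rDD] := D_facts.
case: (leqP Dp r') => hDp; first by lia.
set d := Dp - r' + r.
have dDp : d <= Dp by rewrite /d; lia.
have rd : r < d by rewrite /d; lia.
have de : d <= eps 0 by apply: leq_trans De.
suff: d <= D by rewrite /d; lia.
have [i1 hi1] := ex_r'.
have [i10 i1m /eqP ei1] : [/\ 0 < i1, i1 <= m & e i1 == r'] by apply/and3P; rewrite -inUeq.
have eps_ok : forall x k, k <= m -> x <= eps 0 -> x <= eps k.
  by move=> x k km xe; apply: leq_trans (heps km).
have Dk : forall k, k <= m -> Dp <= eps k by move=> k km; apply: eps_ok.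
have dk : forall k, k <= m -> d <= eps k by move=> k km; apply: eps_ok.
have rk : forall k, k <= m -> r <= eps k by move=> k km; apply: eps_ok => //; apply: r_eps.
have SA : forall i k, 0 < i -> i <= m -> e i = r -> 0 < k -> k <= m -> e k = r' ->
    (Kd 0 Dp * Kd i d <= Kd 0 Dp * Kd k Dp)%VS /\ (Kd 0 Dp * Kd k Dp <= Kd 0 Dp * Kd i d)%VS.
  move=> i k i0 im ei k0 km ek.
  have sub1 : (Kd 0 Dp * Kd i d <= Kd 0 Dp * Kd i Dp)%VS.
    by apply: prodvSr; apply: Kd_mono => //; apply: eps_ok.
  have sub2 : (Kd 0 Dp * Kd k Dp <= Kd 0 Dp * Kd i Dp)%VS.
    apply: (@prodv_sub _ _ _ _ (Kd 0 Dp * Kd i Dp)%AS); first exact: field_subvMr.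
    by apply: P2r; rewrite ?inUeq ?inUlt ?k0 ?km ?ek ?eqxx ?i0 ?im ?ei ?hrr.
  have dd : \dim (Kd 0 Dp * Kd i d) = \dim (Kd 0 Dp * Kd k Dp).
    rewrite !dimM0 ?Dk ?dk ?rk //; congr (p ^ _); rewrite ei ek; lia.
  have c1 : cycF (Kd i Dp) by apply: cKd; rewrite ?Dk ?dk ?rk.
  have s0 : (Kd 0 Dp <= S)%VS by apply: KdS.
  split.
    apply: (@chainF _ L (Kd 0 Dp) (Kd i Dp) (Kd 0 Dp * Kd i d)%AS (Kd 0 Dp * Kd k Dp)%AS) => //.
    - exact: field_subvMr.
    - exact: field_subvMr.
    - by rewrite /= dd.
  apply: (@chainF _ L (Kd 0 Dp) (Kd i Dp) (Kd 0 Dp * Kd k Dp)%AS (Kd 0 Dp * Kd i d)%AS) => //.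
  - exact: field_subvMr.
  - exact: field_subvMr.
  - by rewrite /= dd.
have [i00 hi00] := ex_r.
apply: Delta_ge => //; apply/patchP; split.
- move=> j i; rewrite inUgt inUeq => /and3P[j0 jm rj] /and3P[i0 im /eqP ei].
  have rj' := gap_ge j0 jm rj.
  have h1 : (Kd j d <= Kd 0 Dp * Kd i d)%VS.
    apply: subv_trans (Kd_mono jm dDp (eps_ok _ _ jm De)) _.
    move: rj'; rewrite leq_eqVlt => /orP[/eqP ej | ej].
      have [_ s2] := SA i j i0 im ei j0 jm (esym ej).
      exact: subv_trans (field_subvMl _ _) s2.
    have [_ s2] := SA i i1 i0 im ei i10 i1m ei1.
    apply: subv_trans s2; apply: P1r; first by rewrite inUgt j0 jm.
    exact: hi1.
  rewrite prodvC.
  apply: (subv_trans (field_subvMl (Kd i d) _)).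
  apply: (@chainF _ L (Kd i d) (Kd 0 Dp) (Kd i d * Kd j d)%AS (Kd i d * Kd 0 d)%AS).
  + by apply: KdS; rewrite ?Dk ?dk ?rk.
  + by apply: cKd.
  + exact: field_subvMr.
  + apply: (@prodv_sub _ _ _ _ (Kd i d * Kd 0 Dp)%AS); first exact: field_subvMr.
    by rewrite /= prodvC.
  + exact: field_subvMr.
  + apply: (@prodv_sub _ _ _ _ (Kd i d * Kd 0 Dp)%AS); first exact: field_subvMr.
    apply: subv_trans (field_subvMl _ _); exact: Kd_mono.
  + rewrite /= dimM0' ?Dk ?dk ?rk //.
    have -> : d + d - minn d (minn d (e i)) = d + d - r by rewrite ei; lia.
    apply: (@dimM_lb i (Kd i d) (Kd j d) (Kd 0 r)) => //.
    * by apply: KdS; rewrite ?Dk ?dk ?rk.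
    * by apply: cKd; rewrite ?Dk ?dk ?rk.
    * by rewrite Kd_dim ?Dk ?dk ?rk.
    * by rewrite Kd_dim ?Dk ?dk ?rk.
    * by apply: subv_trans (capvSl _ _) (Kd_sub _ _); rewrite ?Dk ?dk ?rk.
    * by rewrite (Kd_eq im) ?ei // Kd_mono ?Dk ?dk ?rk //; lia.
    * by rewrite (Kd_eq jm) ?Kd_mono ?Dk ?dk ?rk //; lia.
    * by rewrite Kd_dim //; lia.
- move=> i l; rewrite inUeq inUlt => /and3P[i0 im /eqP ei] /and3P[l0 lm el].
  set M := Kd i d.
  have hM1 : (M <= Kd 0 Dp * Kd l Dp)%VS.
    have [s1 _] := SA i i1 i0 im ei i10 i1m ei1.
    apply: (@TR _ _ (Kd i1 Dp)).
      exact: subv_trans (field_subvMl _ _) s1.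
    by apply: P2r => //; rewrite inUlt l0 lm; lia.
  have hM2 : (M <= Kd l Dp * Kd 0 d)%VS.
    apply: (subv_trans (field_subvMl (Kd l Dp) _)).
    apply: (@chainF _ L (Kd l Dp) (Kd 0 Dp) (Kd l Dp * M)%AS (Kd l Dp * Kd 0 d)%AS).
    + by apply: KdS; rewrite ?Dk ?dk ?rk.
    + by apply: cKd.
    + exact: field_subvMr.
    + apply: (@prodv_sub _ _ _ _ (Kd l Dp * Kd 0 Dp)%AS); first exact: field_subvMr.
      by rewrite /= prodvC.
    + exact: field_subvMr.
    + apply: (@prodv_sub _ _ _ _ (Kd l Dp * Kd 0 Dp)%AS); first exact: field_subvMr.
      apply: subv_trans (field_subvMl _ _); exact: Kd_mono.
    + rewrite /= dimM0' ?Dk ?dk ?rk //.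
      have eld : e l <= d by apply: ltnW; apply: leq_trans el (ltnW rd).
      have elD : e l <= Dp by apply: leq_trans eld dDp.
      rewrite (minn_idPr elD) (minn_idPr eld) [d + Dp]addnC.
      rewrite /M; apply: (@dimM_lb l (Kd l Dp) (Kd i d) (Kd 0 (e l)) Dp d (e l)).
      * exact: lm.
      * by apply: KdS; rewrite ?Dk ?dk ?rk.
      * by apply: cKd; rewrite ?Dk ?dk ?rk.
      * by rewrite Kd_dim ?Dk ?dk ?rk.
      * by rewrite Kd_dim ?Dk ?dk ?rk.
      * by apply: subv_trans (capvSl _ _) (Kd_sub _ _); rewrite ?Dk ?dk ?rk.
      * by rewrite (Kd_eq lm) // (Kd_mono lm elD (Dk l lm)).
      * by rewrite (Kd_eq im) ?ei ?(ltnW el) // (Kd_mono im eld (dk i im)).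
      * by rewrite Kd_dim //; apply: leq_trans (e_le lm) _; apply: heps.
  apply: (subv_trans (field_subvMl (Kd 0 d) _)).
  apply: (@chainF _ L (Kd 0 d) (Kd l Dp) (Kd 0 d * M)%AS (Kd 0 d * Kd l d)%AS).
  + exact: KdS.
  + by apply: cKd; rewrite ?Dk ?dk ?rk.
  + exact: field_subvMr.
  + apply: (@prodv_sub _ _ _ _ (Kd 0 d * Kd l Dp)%AS); first exact: field_subvMr.
    by rewrite /= prodvC.
  + exact: field_subvMr.
  + apply: (@prodv_sub _ _ _ _ (Kd 0 d * Kd l Dp)%AS); first exact: field_subvMr.
    apply: subv_trans (field_subvMl _ _); apply: Kd_mono => //; exact: Dk.
  + rewrite /= /M !dimM0 ?Dk ?dk ?rk // dvdn_exp2l //; lia.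
Qed.

End Claims.
End Main.

Unset Implicit Arguments.
Unset Strict Implicit.

Theorem proposition5p3 (F : fieldType) (L : splittingFieldType F)
  (p m : nat) (K : nat -> {subfield L}) (eps : nat -> nat)
  (Kd : nat -> nat -> {subfield L}) (r r' : nat) :
  prime p -> (2 <= m)%N ->
  (forall i, (i <= m)%N -> galois 1%VS (K i) && cyclic ('Gal(K i / 1%VS))%g) ->
  (forall i, (i <= m)%N -> \dim (K i) = (p ^ eps i)%N) ->
  (forall i, (i <= m)%N -> (eps 0 <= eps i)%N) ->
  (\bigcap_(0 <= i < m.+1) (K i : {vspace L}))%VS = 1%VS ->
  (forall i j, (i <= m)%N -> (j <= m)%N -> i != j -> ~~ (K j <= K i)%VS) ->
  (forall i d, (i <= m)%N -> (d <= eps i)%N ->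
     (Kd i d <= K i)%VS /\ \dim (Kd i d) = (p ^ d)%N) ->
  Ueq p m K r != [::] ->
  Ugt p m K r != [::] ->
  (r < r')%N -> Ueq p m K r' != [::] ->
  (forall s, (r < s < r')%N -> Ueq p m K s = [::]) ->
  [/\ r = 0%N -> Delta p m K Kd (eps 0) r = Delta p m K Kd (eps 0) r',
      (Delta p m K Kd (eps 0) r <= Delta p m K Kd (eps 0) r')%N
    & ((Delta p m K Kd (eps 0%N) r')%:Z - r'%:Z <= (Delta p m K Kd (eps 0%N) r)%:Z - r%:Z)%R].
Proof.
move=> hp hm2 hK hdim heps hcap hdist hKd hr hgt hrr hr' hgap.
have c1 := claim1 hp hK hdim heps hKd hr hgt hrr hr' hgap.
have c2 := claim2 hp hK hdim heps hKd hr hgt hrr hr' hgap.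
have c3 := claim3 hp hK hdim heps hKd hr hgt hrr hr' hgap.
split => //; lia.
Qed.
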